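(* Let $n\ge 1$, $N=\{1,\dots,n\}$, $A=[0,1]$, and let $f$ be an OWA mechanism with weights $w_1,\dots,w_n\in[0,1]$, $\sum_j w_j=1$. Then $f$ satisfies proportional fairness (PF) if and only if $w_j=\frac1n$ for all $j\in\{1,\dots,n\}$.
   Context: A mechanism is a map $f:A^n\to A$ from profiles $x=(x_i)_{i\in N}$ of reported locations to a facility location. An OWA mechanism with weights $w_1,\dots,w_n$ returns $f(x)=\sum_{j=1}^n w_j x_{\pi(j)}$, where $\pi$ is a permutation of $N$ with $x_{\pi(1)}\le\dots\le x_{\pi(n)}$. The mechanism $f$ satisfies PF if for every profile $x\in A^n$, every coalition $S\subseteq N$ (nonempty) and every $i\in S$, $|x_i - f(x)| \le 1-\frac{|S|}{n} + r_S$, where $r_S=\max_{j\in S}x_j-\min_{j\in S}x_j$. *)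

(* Defs.v *)
From mathcomp Require Import all_boot all_order all_algebra.
From mathcomp Require Import reals.
Set Implicit Arguments. Unset Strict Implicit. Unset Printing Implicit Defensive.
Import Order.TTheory GRing.Theory Num.Theory.
Local Open Scope ring_scope.

(* Agents N = 'I_n, facility domain A = [0,1] within a real type R. *)

Definition sorted_profile (R : realType) (n : nat) (x : 'I_n -> R) : seq R :=
  sort <=%R [seq x i | i <- enum 'I_n].

(* OWA mechanism: f(x) = sum_j w_j x_{pi(j)} (index j is 0-based here). *)
Definition owa (R : realType) (n : nat) (w : 'I_n -> R) (x : 'I_n -> R) : R :=
  \sum_(j < n) w j * nth 0 (sorted_profile x) j.

Definition in01 (R : realType) (a : R) : bool := (0 <= a) && (a <= 1).

Definition range_S (R : realType) (n : nat) (S : {set 'I_n}) (x : 'I_n -> R) : R :=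
  \big[Num.max/0]_(j in S) x j - \big[Num.min/1]_(j in S) x j.

Definition PF (R : realType) (n : nat) (f : ('I_n -> R) -> R) : Prop :=
  forall x : 'I_n -> R, (forall i, in01 (x i)) ->
  forall S : {set 'I_n}, S != set0 ->
  forall i, i \in S ->
    `|x i - f x| <= 1 - (#|S|%:R / n%:R) + range_S S x.

(* Main.v *)
Require Import Defs.
From mathcomp Require Import all_boot all_order all_algebra.
From mathcomp Require Import reals.
From mathcomp Require Import ring lra.
Import Order.TTheory GRing.Theory Num.Theory.
Local Open Scope ring_scope.

Lemma owa_mono (R : realType) (n : nat) (w : 'I_n -> R) (g : nat -> R) :
  (forall a b, (a <= b)%N -> g a <= g b) ->
  owa w (fun i => g (val i)) = \sum_(j < n) w j * g j.
Proof.
move=> hg; rewrite /owa /sorted_profile.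
have -> : [seq g (val i) | i <- enum 'I_n] = map g (iota 0 n).
  by rewrite -val_enum_ord -map_comp.
rewrite sorted_sort; last first.
  apply: homo_sorted; last exact: iota_sorted.
  by move=> a b; apply: hg.
  exact: le_trans.
apply: eq_bigr => j _; congr (_ * _).
by rewrite (nth_map 0%N) ?size_iota // nth_iota.
Qed.

Lemma owa_sum (R : realType) (n : nat) (w : 'I_n -> R) (c : R) x :
  (forall j, w j = c) -> owa w x = c * \sum_i x i.
Proof.
move=> hw; rewrite /owa /sorted_profile.
under eq_bigr do rewrite hw.
rewrite -mulr_sumr; congr (_ * _).
set s := sort _ _.
have hs : size s = n by rewrite size_sort size_map size_enum_ord.
have -> : \sum_(j < n) nth 0 s j = \sum_(0 <= j < size s) nth 0 s j.
  by rewrite hs big_mkord.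
rewrite -(big_nth 0 xpredT id) /s (perm_big _ (permEl (perm_sort _ _))) big_map.
by rewrite big_enum.
Qed.

Lemma max_ge (R : realType) (n : nat) (S : {set 'I_n}) (x : 'I_n -> R) a :
  a \in S -> x a <= \big[Num.max/0]_(j in S) x j.
Proof. by move=> ha; rewrite (bigD1 a) //= le_max lexx. Qed.

Lemma min_le (R : realType) (n : nat) (S : {set 'I_n}) (x : 'I_n -> R) a :
  a \in S -> \big[Num.min/1]_(j in S) x j <= x a.
Proof. by move=> ha; rewrite (bigD1 a) //= ge_min lexx. Qed.

Lemma range_le0 (R : realType) (n : nat) (S : {set 'I_n}) (x : 'I_n -> R) v :
  (forall j, j \in S -> x j = v) -> 0 <= v <= 1 -> range_S S x <= 0.
Proof.
move=> hv /andP[v0 v1]; rewrite /range_S subr_le0.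
have h1 : \big[Num.max/0]_(j in S) x j <= v.
  apply: (big_ind (fun y => y <= v)) => //.
    by move=> a b ha hb; rewrite ge_max ha hb.
  by move=> j hj; rewrite hv.
have h2 : v <= \big[Num.min/1]_(j in S) x j.
  apply: (big_ind (fun y => v <= y)) => //.
    by move=> a b ha hb; rewrite le_min ha hb.
  by move=> j hj; rewrite hv.
exact: le_trans h1 h2.
Qed.

Lemma sum_bound (R : realType) (n : nat) (S : {set 'I_n}) (y : 'I_n -> R) r :
  (forall j, j \in S -> y j <= r) -> (forall j, j \notin S -> y j <= 1) ->
  \sum_j y j <= r * #|S|%:R + #|~: S|%:R.
Proof.
move=> h1 h2.
have -> : \sum_j y j = \sum_(j in S) y j + \sum_(j in ~: S) y j.
  rewrite (bigID (fun j => j \in S)) /=; congr (_ + _).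
  by apply: eq_bigl => j; rewrite in_setC.
apply: lerD.
  apply: le_trans (ler_sum _ (fun j hj => h1 j hj)) _.
  by rewrite sumr_const mulr_natr.
have hh : forall j, j \in ~: S -> y j <= 1.
  by move=> j; rewrite in_setC; apply: h2.
apply: le_trans (ler_sum _ hh) _.
by rewrite sumr_const.
Qed.

Theorem theorem4 (R : realType) (n : nat) (w : 'I_n -> R) :
  (1 <= n)%N ->
  (forall j, 0 <= w j <= 1) ->
  \sum_(j < n) w j = 1 ->
  (PF (owa w) <-> (forall j, w j = 1 / n%:R)).
Proof.
move=> hn hw01 hsum.
have hN : 0 < n%:R :> R by rewrite ltr0n.
have hN0 : n%:R != 0 :> R by rewrite gt_eqF.
split; last first.
  move=> hw x hx S hS i hi.
  rewrite (@owa_sum _ _ _ _ x hw).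
  set r := range_S S x.
  have hxr : forall j, j \in S -> x i - x j <= r /\ x j - x i <= r.
    move=> j hj; have := @max_ge _ _ _ x _ hi; have := @max_ge _ _ _ x _ hj.
    have := @min_le _ _ _ x _ hi; have := @min_le _ _ _ x _ hj; rewrite /r /range_S.
    move=> ? ? ? ?; split; lra.
  have hr0 : 0 <= r by have [] := hxr i hi; lra.
  have hx1 : forall j, x i - x j <= 1 /\ x j - x i <= 1.
    move=> j; have /andP[? ?] := hx i; have /andP[? ?] := hx j; split; lra.
  have hc : (#|S| + #|~: S|)%:R = n%:R :> R by rewrite cardsC card_ord.
  rewrite natrD in hc.
  have hcn : #|S|%:R <= n%:R :> R by have : 0 <= #|~: S|%:R :> R by []; lra.
  have hcr : #|S|%:R * r <= n%:R * r by rewrite ler_wpM2r.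
  set X := \sum_i x i.
  have hA : \sum_j (x i - x j) = n%:R * x i - X.
    by rewrite sumrB sumr_const card_ord mulr_natl.
  have hB : \sum_j (x j - x i) = X - n%:R * x i.
    by rewrite sumrB sumr_const card_ord mulr_natl.
  have bA := @sum_bound _ _ _ (fun j => x i - x j) r
    (fun j hj => proj1 (hxr j hj)) (fun j _ => proj1 (hx1 j)).
  have bB := @sum_bound _ _ _ (fun j => x j - x i) r
    (fun j hj => proj2 (hxr j hj)) (fun j _ => proj2 (hx1 j)).
  rewrite /= hA in bA; rewrite /= hB in bB.
  have e1 : n%:R * (1 - #|S|%:R / n%:R + r) = n%:R - #|S|%:R + n%:R * r.
    by field.
  have e2 : n%:R * (x i - 1 / n%:R * X) = n%:R * x i - X by field.
  have e3 : n%:R * (- (1 - #|S|%:R / n%:R + r)) = - (n%:R - #|S|%:R + n%:R * r).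
    by rewrite mulrN e1.
  rewrite ler_norml; apply/andP; split.
    by rewrite -(ler_pM2l hN) e2 e3; lra.
  by rewrite -(ler_pM2l hN) e2 e1; lra.
move=> hPF.
pose P k := \sum_(j < n | (j < k)%N) w j.
have hP : forall k, (k <= n)%N -> P k = k%:R / n%:R.
  move=> k hk.
  case: (posnP k) => [->|k0].
    rewrite /P big_pred0 ?mul0r // => j; by rewrite ltn0.
  move: hk; rewrite leq_eqVlt => /orP[/eqP->|kn].
    rewrite divff // /P -hsum; apply: eq_bigl => j; by rewrite ltn_ord.
  pose g (m : nat) : R := if (m < k)%N then 0 else 1.
  pose x := fun i : 'I_n => g (val i).
  have hg : forall a b, (a <= b)%N -> g a <= g b.
    move=> a b hab; rewrite /g; case: ifP; case: ifP => //.
    by move=> h1 h2; move: (leq_ltn_trans hab h1); rewrite h2.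
  pose Q := \sum_(j < n | ~~ (j < k)%N) w j.
  have hPQ : P k + Q = 1 by rewrite -hsum [RHS](bigID (fun j : 'I_n => (j < k)%N)).
  have hf : owa w x = Q.
    rewrite /x owa_mono // (bigID (fun j : 'I_n => (j < k)%N)) /=.
    rewrite big1 ?add0r; last by move=> j hj; rewrite /g hj mulr0.
    by apply: eq_bigr => j hj; rewrite /g (negbTE hj) mulr1.
  have hx : forall i, in01 (x i).
    by move=> i; rewrite /in01 /x /g; case: ifP => _; rewrite ?lexx ?ler01.
  pose S0 := [set i : 'I_n | (i < k)%N].
  have cS0 : #|S0| = k.
    rewrite -sum1_card (eq_bigl (fun i : 'I_n => (i < k)%N)); last first.
      by move=> i; rewrite inE.
    by rewrite -(big_ord_widen _ (fun _ => 1%N)) ?sum1_card ?card_ord // ltnW.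
  have cS1 : #|~: S0| = (n - k)%N.
    by rewrite -[n in RHS](card_ord n) -(cardsC S0) cS0 addKn.
  pose i0 : 'I_n := Ordinal hn.
  have i0S : i0 \in S0 by rewrite inE.
  have S0n : S0 != set0 by apply/set0Pn; exists i0.
  have hn1 : (n.-1 < n)%N by rewrite prednK.
  pose i1 : 'I_n := Ordinal hn1.
  have i1S : i1 \in ~: S0.
    rewrite in_setC inE /= -leqNgt -ltnS prednK //.
  have S1n : ~: S0 != set0 by apply/set0Pn; exists i1.
  have r0 : range_S S0 x <= 0.
    apply: (@range_le0 _ _ _ _ 0); last by rewrite lexx ler01.
    by move=> j; rewrite inE /x /g => ->.
  have r1 : range_S (~: S0) x <= 0.
    apply: (@range_le0 _ _ _ _ 1); last by rewrite lexx ler01.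
    by move=> j; rewrite in_setC inE /x /g => /negbTE ->.
  have h0 := hPF x hx S0 S0n i0 i0S.
  have h1 := hPF x hx (~: S0) S1n i1 i1S.
  rewrite hf cS0 in h0; rewrite hf cS1 in h1.
  have x0 : x i0 = 0 by rewrite /x /g /= k0.
  have x1 : x i1 = 1.
    by rewrite /x /g /=; move: i1S; rewrite in_setC inE /= => /negbTE ->.
  rewrite x0 in h0; rewrite x1 in h1.
  have e : (n - k)%:R / n%:R = 1 - k%:R / n%:R :> R.
    by rewrite (natrB _ (ltnW kn)) mulrBl divff.
  rewrite e in h1.
  move: h0 h1; rewrite !ler_norml => /andP[a0 b0] /andP[a1 b1].
  move: hPQ a0 b1 r0 r1.
  set A := P k; set B := k%:R / n%:R; set C := range_S S0 x; set D := range_S (~: S0) x.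
  clear.
  move=> *; lra.
move=> j.
have hj : P j.+1 = P j + w j.
  rewrite /P (bigD1 j) //= addrC; congr (_ + _).
  apply: eq_bigl => i; rewrite ltnS andbC.
  by rewrite [(i < j)%N]ltn_neqAle.
have := hP _ (ltn_ord j); have := hP _ (ltnW (ltn_ord j)).
rewrite hj => ->; rewrite -natr1 => h.
have -> : w j = (j%:R + 1) / n%:R - j%:R / n%:R by rewrite -h; ring.
by field.
Qed.
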